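(* Consider a fixed-wing UAV with constant speed $V_g>0$ and kinematics $$\dot x_p=V_g\cos\gamma\cos\chi,\ \dot y_p=V_g\cos\gamma\sin\chi,\ \dot z_p=V_g\sin\gamma,\quad \dot\chi=\frac{a_{yc}}{V_g\cos\gamma}+d_\chi,\ \dot\gamma=\frac{a_{zc}-g\cos\gamma}{V_g}+d_\gamma,$$ with disturbances satisfying $\sqrt{d_\chi^2+d_\gamma^2}\le L_d$, tracking a virtual target $(x_c,y_c,z_c)$. Let $k_q>0$, $0<\delta<\pi/2$, and apply the modified guidance law $$a_{yc}^*=(k_q\sin\eta^{lat}+f_{lat})V_g\cos\gamma,\qquad a_{zc}^*=(k_q\sin\eta^{lon}+f_{lon})V_g+g\cos\gamma,$$ with compensation terms $f_{lat}=\dot C_1-f_\chi$, $f_{lon}=\dot C_2-f_\gamma$, where $f_\chi,f_\gamma$ are such that for some $\tau>0$, at every state with $|\eta^{lat}|\le\delta$, $|\eta^{lon}|\le\delta$ and $(\sin\eta^{lat}\cos\eta^{lat},\sin\eta^{lon}\cos\eta^{lon})\ne(0,0)$, $$\frac{f_\chi\sin\eta^{lat}\cos\eta^{lat}+f_\gamma\sin\eta^{lon}\cos\eta^{lon}}{\sqrt{\sin^2\eta^{lat}\cos^2\eta^{lat}+\sin^2\eta^{lon}\cos^2\eta^{lon}}}+L_d+\tau\le0.$$ Then along closed-loop trajectories satisfying $|\eta^{lon}|\le\delta$ and $|\eta^{lat}|\le\delta$, the look-ahead angles $\eta^{lat},\eta^{lon}$ converge to zero in finite time, with settling time bounded by 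$$T\le\frac{1}{k_q\cos\delta}\ln\!\left(1+\frac{k_q}{\tau}\sqrt{\sin^2\eta^{lon}(0)+\sin^2\eta^{lat}(0)}\right).$$
   Context: $\chi$ is the track angle, $\gamma$ the flight-path angle (with $\cos\gamma\neq0$), $g$ gravitational acceleration, $a_{yc},a_{zc}$ lateral and longitudinal acceleration commands. The line-of-sight angles are $C_1=\tan^{-1}\frac{y_c-y_p}{x_c-x_p}$ and $C_2=\tan^{-1}\frac{z_c-z_p}{\sqrt{(x_c-x_p)^2+(y_c-y_p)^2}}$, and the look-ahead angles are $\eta^{lat}=C_1-\chi$, $\eta^{lon}=C_2-\gamma$; $\dot C_1,\dot C_2$ are their time derivatives along the trajectory. No saturation of the commands is imposed in this statement. *)

(* Defs.v *)
From Stdlib Require Import Reals.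
From Coquelicot Require Import Coquelicot.
Open Scope R_scope.

Definition los_C1 (xc yc xp yp : R) : R := atan ((yc - yp) / (xc - xp)).
Definition los_C2 (xc yc zc xp yp zp : R) : R :=
  atan ((zc - zp) / sqrt ((xc - xp) ^ 2 + (yc - yp) ^ 2)).

Definition C1_t (xc yc xp yp : R -> R) (t : R) : R :=
  los_C1 (xc t) (yc t) (xp t) (yp t).
Definition C2_t (xc yc zc xp yp zp : R -> R) (t : R) : R :=
  los_C2 (xc t) (yc t) (zc t) (xp t) (yp t) (zp t).

Definition eta_lat (xc yc xp yp chi : R -> R) (t : R) : R :=
  C1_t xc yc xp yp t - chi t.
Definition eta_lon (xc yc zc xp yp zp gam : R -> R) (t : R) : R :=
  C2_t xc yc zc xp yp zp t - gam t.

(* Main.v *)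
Require Import Defs.
From Stdlib Require Import Reals Lra Psatz Classical.
From Coquelicot Require Import Coquelicot.
Open Scope R_scope.

Lemma ball_R (x y e : R) : Rabs (y - x) < e -> ball x e y.
Proof. intros. unfold ball; simpl; unfold AbsRing_ball; simpl; unfold abs, minus, plus, opp; simpl. exact H. Qed.

Lemma ball_R' (x y e : R) : ball x e y -> Rabs (y - x) < e.
Proof. intros. unfold ball in H; simpl in H; unfold AbsRing_ball in H; simpl in H; unfold abs, minus, plus, opp in H; simpl in H. exact H. Qed.

Lemma claim (V G dG : R -> R) (c tau kq : R)
  (hkq : 0 < kq) (htau : 0 < tau) (hc : 0 <= c)
  (Vnn : forall t, 0 <= V t)
  (hG : forall t, G t = (kq * V t + tau) * exp (c * t))
  (contV : forall s, 0 < s -> continuity_pt V s)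
  (contG : forall s, 0 <= s -> filterlim G (at_right s) (locally (G s)))
  (derG : forall t, 0 < t -> 0 < V t -> is_derive G t (dG t) /\ dG t <= 0) :
  forall t, 0 <= t -> 0 < V t -> G t <= G 0.
Proof.
  intros t ht0 hVt.
  destruct (Req_dec t 0) as [->|ht]; [lra|].
  assert (htp : 0 < t) by lra.
  set (E := fun u => 0 <= u <= t /\ (u = 0 \/ V u = 0)).
  destruct (completeness E) as [s [hub hlub]].
  { exists t. intros u [hu _]. lra. }
  { exists 0. split; [lra|now left]. }
  assert (hs0 : 0 <= s) by (apply hub; split; [lra|now left]).
  assert (hst : s <= t) by (apply hlub; intros u [hu _]; lra).
  assert (hpos : forall u, s < u -> u <= t -> 0 < V u).
  { intros u h1 h2. destruct (Vnn u) as [|h]; [assumption|].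
    assert (E u) by (split; [lra|right; auto]). apply hub in H. lra. }
  assert (hzero : s = 0 \/ V s = 0).
  { destruct (Req_dec (V s) 0) as [|hv]; [now right|left].
    destruct (Req_dec s 0) as [|hs]; [assumption|exfalso].
    assert (hVs : 0 < V s) by (destruct (Vnn s); [lra|congruence]).
    destruct (contV s ltac:(lra) (V s) hVs) as [alp [halp hc']].
    set (d := Rmin alp s / 2).
    assert (hd : 0 < d) by (unfold d; apply Rmin_case; lra).
    assert (hd2 : d < alp /\ d <= s / 2) by (unfold d; split; apply Rmin_case_strong; intros; lra).
    destruct (classic (exists u, E u /\ s - d < u)) as [[u [[hu1 hu2] hu3]]|hn].
    - assert (hus : u <= s) by (apply hub; split; auto).
      destruct hu2 as [hu2|hu2]; [lra|].
      assert (Rabs (V u - V s) < V s).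
      { apply (hc' u). split; [split; [exact I|intro; subst u; lra]|]. simpl. unfold R_dist.
        rewrite Rabs_left1; lra. }
      rewrite hu2 in H. rewrite Rabs_left1 in H; lra.
    - assert (is_upper_bound E (s - d)).
      { intros u hu. destruct (Rle_dec u (s - d)) as [|hn']; [assumption|].
        exfalso; apply hn; exists u; split; auto; lra. }
      apply hlub in H. lra. }
  assert (hslt : s < t).
  { destruct hst as [|hst]; [assumption|]. subst s. destruct hzero; lra. }
  assert (mono : forall u, s < u < t -> G t <= G u).
  { intros u hu.
    pose proof (MVT_gen G u t dG) as M. cbv zeta in M.
    rewrite Rmin_left, Rmax_right in M by lra.
    destruct M as [x [hx he]].
    - intros x hx. apply derG; [lra|apply hpos; lra].
    - intros x hx. apply (continuity_pt_filterlim G x).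
      apply (ex_derive_continuous (K:=R_AbsRing) (V:=R_NormedModule)). exists (dG x). apply derG; [lra|apply hpos; lra].
    - assert (dG x <= 0) by (apply derG; [lra|apply hpos; lra]).
      nra. }
  assert (hlim : G t <= G s).
  { destruct (Rle_dec (G t) (G s)) as [|hn]; [assumption|exfalso].
    apply Rnot_le_lt in hn.
    pose proof (proj1 (filterlim_locally G (G s)) (contG s hs0) (mkposreal _ (Rlt_Rminus _ _ hn))) as HH.
    destruct HH as [e he]. simpl in he.
    set (y := s + Rmin e (t - s) / 2).
    assert (hy : 0 < Rmin e (t - s) / 2 /\ Rmin e (t-s) / 2 < e /\ Rmin e (t - s) / 2 < t - s).
    { destruct e as [e ep]; simpl in *. repeat split; apply Rmin_case_strong; intros; lra. }
    specialize (he y).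
    assert (hb : ball s e y) by (apply ball_R; unfold y; rewrite Rabs_right; lra).
    specialize (he hb ltac:(unfold y; lra)). apply ball_R' in he.
    assert (G t <= G y) by (apply mono; unfold y; lra).
    apply Rabs_def2 in he. lra. }
  destruct hzero as [->|hz]; [assumption|].
  exfalso. rewrite !hG, hz in hlim.
  assert (exp (c * s) <= exp (c * t)).
  { destruct (Req_dec (c*s) (c*t)) as [e|]; [rewrite e; lra|].
    left; apply exp_increasing. nra. }
  pose proof (exp_pos (c * t)). pose proof (exp_pos (c * s)).
  assert (0 < kq * V t) by nra.
  nra.
Qed.

Lemma cont1 (f : R -> R) x : (forall x, ex_derive f x) -> filterlim f (locally x) (locally (f x)).
Proof. intros H. apply (ex_derive_continuous (K:=R_AbsRing) (V:=R_NormedModule)). auto. Qed.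

Lemma contV_gen {T} (F : (T -> Prop) -> Prop) {FF : Filter F} (el eo : T -> R) (a b : R) :
  filterlim el F (locally a) -> filterlim eo F (locally b) ->
  filterlim (fun t => sqrt (sin (el t) ^ 2 + sin (eo t) ^ 2)) F
    (locally (sqrt (sin a ^ 2 + sin b ^ 2))).
Proof.
  intros ha hb.
  eapply filterlim_comp with (f := fun t => sin (el t) ^ 2 + sin (eo t) ^ 2).
  2: { apply (continuity_pt_filterlim sqrt). apply continuity_pt_sqrt. nra. }
  apply (filterlim_comp_2 (G:=locally (sin a ^ 2)) (H:=locally (sin b ^ 2)) (fun t => sin (el t) ^ 2) (fun t => sin (eo t) ^ 2) Rplus).
  - apply (filterlim_comp _ _ _ el (fun x => sin x ^ 2) F (locally a)); [exact ha|]. apply (cont1 (fun x => sin x ^ 2)). intros; auto_derive; auto.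
  - apply (filterlim_comp _ _ _ eo (fun x => sin x ^ 2) F (locally b)); [exact hb|]. apply (cont1 (fun x => sin x ^ 2)). intros; auto_derive; auto.
  - apply (filterlim_plus (K:=R_AbsRing) (V:=R_NormedModule)).
Qed.

Lemma contG_gen {T} (F : (T -> Prop) -> Prop) {FF : Filter F} (tm : T -> R) (V : T -> R) (v s kq tau c : R) :
  filterlim V F (locally v) -> filterlim tm F (locally s) ->
  filterlim (fun t => (kq * V t + tau) * exp (c * tm t)) F
    (locally ((kq * v + tau) * exp (c * s))).
Proof.
  intros hv hs.
  apply (filterlim_comp_2 (G:=locally (kq * v + tau)) (H:=locally (exp (c * s))) (fun t => kq * V t + tau) (fun t => exp (c * tm t)) Rmult).
  - apply (filterlim_comp _ _ _ V (fun x => kq * x + tau) F (locally v)); [exact hv|]. apply (cont1 (fun x => kq * x + tau)). intros; auto_derive; auto.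
  - apply (filterlim_comp _ _ _ tm (fun x => exp (c * x)) F (locally s)); [exact hs|]. apply (cont1 (fun x => exp (c * x))). intros; auto_derive; auto.
  - apply (filterlim_mult (K:=R_AbsRing)).
Qed.

Lemma cont_minus {T} (F : (T -> Prop) -> Prop) {FF : Filter F} (f g : T -> R) a b :
  filterlim f F (locally a) -> filterlim g F (locally b) ->
  filterlim (fun t => f t - g t) F (locally (a - b)).
Proof.
  intros ha hb.
  apply (filterlim_comp_2 (G:=locally a) (H:=locally (- b)) f (fun t => - g t) Rplus).
  - exact ha.
  - apply (filterlim_comp _ _ _ g Ropp F (locally b)); [exact hb|]. apply (filterlim_opp (K:=R_AbsRing) (V:=R_NormedModule)).
  - apply (filterlim_plus (K:=R_AbsRing) (V:=R_NormedModule)).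
Qed.

Lemma isd_eq (f : R -> R) x l l' : is_derive f x l -> l = l' -> is_derive f x l'.
Proof. intros; subst; auto. Qed.

Lemma derG_calc (el eo : R -> R) t del deo kq tau c :
  is_derive el t del -> is_derive eo t deo ->
  0 < sqrt (sin (el t) ^ 2 + sin (eo t) ^ 2) ->
  is_derive (fun t => (kq * sqrt (sin (el t) ^ 2 + sin (eo t) ^ 2) + tau) * exp (c * t)) t
    ((kq * ((2 * sin (el t) * cos (el t) * del + 2 * sin (eo t) * cos (eo t) * deo)
       / (2 * sqrt (sin (el t) ^ 2 + sin (eo t) ^ 2)))) * exp (c * t)
     + (kq * sqrt (sin (el t) ^ 2 + sin (eo t) ^ 2) + tau) * (c * exp (c * t))).
Proof.
  intros hel heo hV.
  assert (hS : 0 < sin (el t) ^ 2 + sin (eo t) ^ 2).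
  { destruct (Rle_dec (sin (el t) ^ 2 + sin (eo t) ^ 2) 0) as [h|h]; [|lra].
    rewrite sqrt_neg_0 in hV; lra. }
  assert (h1 : is_derive (fun t => sin (el t)) t (cos (el t) * del)).
  { eapply isd_eq. apply (is_derive_comp sin el t (cos (el t)) del (is_derive_sin _) hel).
    unfold scal; simpl; unfold mult; simpl. ring. }
  assert (h2 : is_derive (fun t => sin (eo t)) t (cos (eo t) * deo)).
  { eapply isd_eq. apply (is_derive_comp sin eo t (cos (eo t)) deo (is_derive_sin _) heo).
    unfold scal; simpl; unfold mult; simpl. ring. }
  assert (h3 : is_derive (fun t => sin (el t) ^ 2 + sin (eo t) ^ 2) t
     (2 * sin (el t) * cos (el t) * del + 2 * sin (eo t) * cos (eo t) * deo)).
  { eapply isd_eq. apply (is_derive_plus (fun t => sin (el t) ^ 2) (fun t => sin (eo t) ^ 2)).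
    apply (is_derive_pow _ 2 _ _ h1). apply (is_derive_pow _ 2 _ _ h2).
    unfold plus; simpl. ring. }
  assert (h4 := is_derive_sqrt _ _ _ h3 hS).
  assert (h5 : is_derive (fun t => kq * sqrt (sin (el t) ^ 2 + sin (eo t) ^ 2) + tau) t
     (kq * ((2 * sin (el t) * cos (el t) * del + 2 * sin (eo t) * cos (eo t) * deo)
       / (2 * sqrt (sin (el t) ^ 2 + sin (eo t) ^ 2))))).
  { eapply isd_eq. apply (is_derive_plus (fun t => kq * sqrt (sin (el t) ^ 2 + sin (eo t) ^ 2)) (fun _ => tau)).
    apply (is_derive_scal _ _ kq _ h4). apply is_derive_const.
    unfold plus, zero; simpl. ring. }
  assert (h6 : is_derive (fun t => exp (c * t)) t (c * exp (c * t))).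
  { assert (hl : is_derive (fun t => c * t) t c).
    { eapply isd_eq. apply (is_derive_scal (fun t => t) t c 1). apply (is_derive_id (K:=R_AbsRing)). change (c * 1 = c). ring. }
    eapply isd_eq. apply (is_derive_comp exp (fun t => c * t) t (exp (c * t)) c (is_derive_exp _) hl).
    unfold scal; simpl; unfold mult; simpl. ring. }
  eapply isd_eq. apply (is_derive_mult _ _ t _ _ h5 h6).
  intros; unfold mult; simpl; ring.
  unfold plus, mult; simpl. ring.
Qed.

Lemma cos_ge_delta x delta : 0 < delta < PI / 2 -> Rabs x <= delta -> cos delta <= cos x.
Proof.
  intros hd hx. pose proof PI_RGT_0.
  destruct (Rcase_abs x) as [h|h].
  - rewrite Rabs_left in hx by lra. rewrite <- (cos_neg x).
    apply cos_decr_1; lra.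
  - rewrite Rabs_right in hx by lra. apply cos_decr_1; lra.
Qed.

Lemma sign_lemma (e1 e2 kq tau delta Ld fch fgm dch dgm E : R) :
  0 < kq -> 0 < tau -> 0 < delta < PI / 2 -> 0 < E ->
  Rabs e1 <= delta -> Rabs e2 <= delta ->
  sqrt (dch ^ 2 + dgm ^ 2) <= Ld ->
  ((sin e1 * cos e1, sin e2 * cos e2) <> (0, 0) ->
     (fch * (sin e1 * cos e1) + fgm * (sin e2 * cos e2))
       / sqrt ((sin e1) ^ 2 * (cos e1) ^ 2 + (sin e2) ^ 2 * (cos e2) ^ 2)
       + Ld + tau <= 0) ->
  0 < sqrt (sin e1 ^ 2 + sin e2 ^ 2) ->
  (kq * ((2 * sin e1 * cos e1 * (- kq * sin e1 + fch - dch)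
          + 2 * sin e2 * cos e2 * (- kq * sin e2 + fgm - dgm))
       / (2 * sqrt (sin e1 ^ 2 + sin e2 ^ 2)))) * E
  + (kq * sqrt (sin e1 ^ 2 + sin e2 ^ 2) + tau) * (kq * cos delta * E) <= 0.
Proof.
  intros hkq htau hd hE h1 h2 hdist hf hV.
  pose proof PI_RGT_0.
  assert (hcd : 0 < cos delta) by (apply cos_gt_0; lra).
  assert (hc1 := cos_ge_delta e1 delta hd h1).
  assert (hc2 := cos_ge_delta e2 delta hd h2).
  set (s1 := sin e1) in *. set (s2 := sin e2) in *.
  set (c1 := cos e1) in *. set (c2 := cos e2) in *. set (cd := cos delta) in *.
  set (S := s1 ^ 2 + s2 ^ 2) in *.
  set (V := sqrt S) in *.
  assert (hS : 0 < S).
  { destruct (Rle_dec S 0) as [h|h]; [|lra]. unfold V in hV; rewrite sqrt_neg_0 in hV; lra. }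
  assert (hVV : V * V = S) by (apply sqrt_sqrt; lra).
  set (a := s1 * c1) in *. set (b := s2 * c2) in *.
  assert (hab : s1 ^ 2 * c1 ^ 2 + s2 ^ 2 * c2 ^ 2 = a ^ 2 + b ^ 2) by (unfold a, b; ring).
  rewrite hab in hf.
  set (W := sqrt (a ^ 2 + b ^ 2)) in *.
  assert (hne : (a, b) <> (0, 0)).
  { intro H0. injection H0 as ha hb. unfold a, b in *.
    apply Rmult_integral in ha. apply Rmult_integral in hb.
    destruct ha as [ha|ha]; [|lra]. destruct hb as [hb|hb]; [|lra].
    unfold S in hS; rewrite ha, hb in hS. lra. }
  assert (hab0 : 0 < a ^ 2 + b ^ 2).
  { destruct (Req_dec a 0) as [ha|ha].
    - destruct (Req_dec b 0) as [hb|hb]. { exfalso; apply hne; rewrite ha, hb; auto. }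
      assert (0 < b ^ 2) by (apply pow2_gt_0; auto). nra.
    - assert (0 < a ^ 2) by (apply pow2_gt_0; auto). nra. }
  assert (hW : 0 < W) by (apply sqrt_lt_R0; auto).
  specialize (hf hne).
  assert (hF : fch * a + fgm * b <= - (Ld + tau) * W).
  { assert (e : fch * a + fgm * b = ((fch * a + fgm * b) / W) * W) by (field; lra).
    rewrite e. nra. }
  assert (hCS : - (dch * a + dgm * b) <= Ld * W).
  { pose proof (sqrt_cauchy (- dch) (- dgm) a b) as hc.
    unfold Rsqr in hc.
    replace ((- dch) * (- dch) + (- dgm) * (- dgm)) with (dch ^ 2 + dgm ^ 2) in hc by ring.
    replace (a * a + b * b) with (a ^ 2 + b ^ 2) in hc by ring.
    fold W in hc. nra. }
  assert (hWV : cd * V <= W).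
  { assert (e : cd * V = sqrt (cd ^ 2 * S)).
    { rewrite sqrt_mult_alt by nra. rewrite sqrt_pow2 by lra. reflexivity. }
    rewrite e. apply sqrt_le_1; [nra|nra|].
    unfold a, b, S. 
    assert (cd ^ 2 <= c1 ^ 2) by nra. assert (cd ^ 2 <= c2 ^ 2) by nra. nra. }
  assert (hT1 : cd * S <= s1 ^ 2 * c1 + s2 ^ 2 * c2).
  { unfold S. assert (0 <= s1 ^ 2) by nra. assert (0 <= s2 ^ 2) by nra. nra. }
  set (N := a * (- kq * s1 + fch - dch) + b * (- kq * s2 + fgm - dgm)).
  assert (hN : N <= - kq * cd * S - tau * cd * V).
  { assert (e : N = - kq * (s1 ^ 2 * c1 + s2 ^ 2 * c2) + (fch * a + fgm * b) - (dch * a + dgm * b))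
      by (unfold N, a, b; ring).
    rewrite e. nra. }
  assert (hV0 : 0 < V) by auto.
  replace (2 * s1 * c1 * (- kq * s1 + fch - dch) + 2 * s2 * c2 * (- kq * s2 + fgm - dgm))
    with (2 * N) by (unfold N, a, b; ring).
  replace (kq * (2 * N / (2 * V)) * E) with ((kq * E / V) * N) by (field; lra).
  assert (hq : 0 < kq * E / V) by (apply Rdiv_lt_0_compat; nra).
  assert ((kq * E / V) * N <= (kq * E / V) * (- kq * cd * S - tau * cd * V)) by (apply Rmult_le_compat_l; lra).
  assert (e : (kq * E / V) * (- kq * cd * S - tau * cd * V) = - (kq * V + tau) * (kq * cd * E)).
  { rewrite <- hVV. field. lra. }
  lra.
Qed.

Lemma sin0 x : Rabs x < PI -> sin x = 0 -> x = 0.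
Proof.
  intros h hs. destruct (Rtotal_order x 0) as [h1|[h1|h1]]; auto.
  - rewrite Rabs_left in h by lra. assert (0 < sin (- x)) by (apply sin_gt_0; lra).
    rewrite sin_neg in H. lra.
  - rewrite Rabs_right in h by lra. assert (0 < sin x) by (apply sin_gt_0; lra). lra.
Qed.

Theorem theorem3
  (Vg g kq delta tau Ld : R)
  (xp yp zp chi gam : R -> R)        (* UAV state *)
  (xc yc zc : R -> R)                (* virtual target *)
  (dchi dgam : R -> R)               (* disturbances *)
  (ayc azc : R -> R)                 (* acceleration commands *)
  (fchi fgam : R -> R)               (* compensation terms along the trajectory *)
  (C1d C2d : R -> R)                 (* time derivatives of C1, C2 *)
  (hVg : 0 < Vg) (hkq : 0 < kq) (hdelta : 0 < delta < PI / 2) (htau : 0 < tau)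
  (* kinematics *)
  (hx : forall t, 0 < t -> is_derive xp t (Vg * cos (gam t) * cos (chi t)))
  (hy : forall t, 0 < t -> is_derive yp t (Vg * cos (gam t) * sin (chi t)))
  (hz : forall t, 0 < t -> is_derive zp t (Vg * sin (gam t)))
  (hchi : forall t, 0 < t ->
     is_derive chi t (ayc t / (Vg * cos (gam t)) + dchi t))
  (hgam : forall t, 0 < t ->
     is_derive gam t ((azc t - g * cos (gam t)) / Vg + dgam t))
  (hcos : forall t, 0 <= t -> cos (gam t) <> 0)
  (* disturbance bound *)
  (hd : forall t, 0 <= t -> sqrt (dchi t ^ 2 + dgam t ^ 2) <= Ld)
  (* C1dot, C2dot are the time derivatives of the LOS angles *)
  (hC1 : forall t, 0 < t -> is_derive (C1_t xc yc xp yp) t (C1d t))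
  (hC2 : forall t, 0 < t -> is_derive (C2_t xc yc zc xp yp zp) t (C2d t))
  (* continuity of the trajectory at the initial time *)
  (hc0 : filterlim chi (at_right 0) (locally (chi 0)) /\
         filterlim gam (at_right 0) (locally (gam 0)) /\
         filterlim (C1_t xc yc xp yp) (at_right 0)
                   (locally (C1_t xc yc xp yp 0)) /\
         filterlim (C2_t xc yc zc xp yp zp) (at_right 0)
                   (locally (C2_t xc yc zc xp yp zp 0)))
  (* modified guidance law, f_lat = C1dot - f_chi, f_lon = C2dot - f_gamma *)
  (hayc : forall t, 0 < t ->
     ayc t = (kq * sin (eta_lat xc yc xp yp chi t) + (C1d t - fchi t))
             * Vg * cos (gam t))
  (hazc : forall t, 0 < t ->
     azc t = (kq * sin (eta_lon xc yc zc xp yp zp gam t) + (C2d t - fgam t))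
             * Vg + g * cos (gam t))
  (* condition on the compensation terms *)
  (hf : forall t, 0 <= t ->
     let el := eta_lat xc yc xp yp chi t in
     let eo := eta_lon xc yc zc xp yp zp gam t in
     Rabs el <= delta -> Rabs eo <= delta ->
     (sin el * cos el, sin eo * cos eo) <> (0, 0) ->
     (fchi t * (sin el * cos el) + fgam t * (sin eo * cos eo))
       / sqrt ((sin el) ^ 2 * (cos el) ^ 2 + (sin eo) ^ 2 * (cos eo) ^ 2)
       + Ld + tau <= 0)
  (* the trajectory stays in the region |eta| <= delta *)
  (hreg : forall t, 0 <= t ->
     Rabs (eta_lat xc yc xp yp chi t) <= delta /\
     Rabs (eta_lon xc yc zc xp yp zp gam t) <= delta) :
  exists T, 0 <= T /\
    T <= 1 / (kq * cos delta) *
         ln (1 + kq / tau *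
              sqrt ((sin (eta_lon xc yc zc xp yp zp gam 0)) ^ 2
                    + (sin (eta_lat xc yc xp yp chi 0)) ^ 2)) /\
    forall t, T <= t ->
      eta_lat xc yc xp yp chi t = 0 /\ eta_lon xc yc zc xp yp zp gam t = 0.
Proof.
  pose proof PI_RGT_0 as hPI.
  set (el := eta_lat xc yc xp yp chi).
  set (eo := eta_lon xc yc zc xp yp zp gam).
  set (c := kq * cos delta).
  assert (hcd : 0 < cos delta) by (apply cos_gt_0; lra).
  assert (hc : 0 < c) by (unfold c; nra).
  set (V := fun t => sqrt (sin (el t) ^ 2 + sin (eo t) ^ 2)).
  set (G := fun t => (kq * V t + tau) * exp (c * t)).
  set (dG := fun t =>
    (kq * ((2 * sin (el t) * cos (el t) * (- kq * sin (el t) + fchi t - dchi t)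
          + 2 * sin (eo t) * cos (eo t) * (- kq * sin (eo t) + fgam t - dgam t))
       / (2 * sqrt (sin (el t) ^ 2 + sin (eo t) ^ 2)))) * exp (c * t)
     + (kq * sqrt (sin (el t) ^ 2 + sin (eo t) ^ 2) + tau) * (c * exp (c * t))).
  assert (hel : forall t, 0 < t -> is_derive el t (- kq * sin (el t) + fchi t - dchi t)).
  { intros t ht. eapply isd_eq.
    apply (is_derive_minus (C1_t xc yc xp yp) chi t _ _ (hC1 t ht) (hchi t ht)).
    change (C1d t - (ayc t / (Vg * cos (gam t)) + dchi t) = - kq * sin (el t) + fchi t - dchi t).
    rewrite (hayc t ht). fold el. field. split; [apply hcos; lra|lra]. }
  assert (heo : forall t, 0 < t -> is_derive eo t (- kq * sin (eo t) + fgam t - dgam t)).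
  { intros t ht. eapply isd_eq.
    apply (is_derive_minus (C2_t xc yc zc xp yp zp) gam t _ _ (hC2 t ht) (hgam t ht)).
    change (C2d t - ((azc t - g * cos (gam t)) / Vg + dgam t) = - kq * sin (eo t) + fgam t - dgam t).
    rewrite (hazc t ht). fold eo. field. lra. }
  assert (cel : forall s, 0 < s -> filterlim el (locally s) (locally (el s))).
  { intros s hs. apply (ex_derive_continuous (K:=R_AbsRing) (V:=R_NormedModule)).
    eexists; apply hel; auto. }
  assert (ceo : forall s, 0 < s -> filterlim eo (locally s) (locally (eo s))).
  { intros s hs. apply (ex_derive_continuous (K:=R_AbsRing) (V:=R_NormedModule)).
    eexists; apply heo; auto. }
  destruct hc0 as [hc0a [hc0b [hc0c hc0d]]].
  assert (cel0 : filterlim el (at_right 0) (locally (el 0))).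
  { apply (cont_minus (at_right 0) (C1_t xc yc xp yp) chi); auto. }
  assert (ceo0 : filterlim eo (at_right 0) (locally (eo 0))).
  { apply (cont_minus (at_right 0) (C2_t xc yc zc xp yp zp) gam); auto. }
  assert (Vnn : forall t, 0 <= V t) by (intros; apply sqrt_pos).
  assert (contV : forall s, 0 < s -> continuity_pt V s).
  { intros s hs. apply (continuity_pt_filterlim V s).
    apply (contV_gen (locally s) el eo); auto. }
  assert (contG : forall s, 0 <= s -> filterlim G (at_right s) (locally (G s))).
  { intros s hs. destruct hs as [hs|hs].
    - apply (filterlim_filter_le_1 (F := locally s)). apply filter_le_within.
      apply (contG_gen (locally s) (fun t => t) V).
      apply (contV_gen (locally s) el eo); auto. apply filterlim_id.
    - subst s. apply (contG_gen (at_right 0) (fun t => t) V).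
      apply (contV_gen (at_right 0) el eo); auto.
      apply (filterlim_filter_le_1 (F := locally 0)). apply filter_le_within. apply filterlim_id. }
  assert (derG : forall t, 0 < t -> 0 < V t -> is_derive G t (dG t) /\ dG t <= 0).
  { intros t ht hV. split.
    - apply derG_calc; auto.
    - destruct (hreg t ltac:(lra)) as [r1 r2].
      apply (sign_lemma (el t) (eo t) kq tau delta Ld (fchi t) (fgam t) (dchi t) (dgam t) (exp (c * t))); auto.
      apply exp_pos. apply hd; lra. apply (hf t ltac:(lra)); auto. }
  pose proof (claim V G dG c tau kq hkq htau ltac:(lra) Vnn (fun t => eq_refl) contV contG derG) as CL.
  set (V0 := sqrt (sin (eo 0) ^ 2 + sin (el 0) ^ 2)).
  assert (hV0 : V 0 = V0) by (unfold V, V0; rewrite Rplus_comm; reflexivity).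
  assert (hV0p : 0 <= V0) by apply sqrt_pos.
  assert (hq : 0 <= kq / tau * V0) by (apply Rmult_le_pos; [apply Rlt_le, Rdiv_lt_0_compat|]; lra).
  assert (hic : 0 < 1 / (kq * cos delta)).
  { unfold Rdiv; apply Rmult_lt_0_compat; [lra|apply Rinv_0_lt_compat; nra]. }
  exists (1 / (kq * cos delta) * ln (1 + kq / tau * V0)).
  split.
  { apply Rmult_le_pos. lra.
    rewrite <- ln_1. apply ln_le; lra. }
  split; [right; reflexivity|].
  intros t hT.
  assert (ht0 : 0 <= t).
  { eapply Rle_trans; [|exact hT]. apply Rmult_le_pos. lra.
    rewrite <- ln_1. apply ln_le; lra. }
  assert (hVt : V t = 0).
  { destruct (Vnn t) as [hp|]; [exfalso|auto].
    specialize (CL t ht0 hp). unfold G in CL. rewrite hV0 in CL.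
    rewrite Rmult_0_r, exp_0, Rmult_1_r in CL.
    pose proof (exp_pos (c * t)).
    assert (hlt : exp (c * t) < 1 + kq / tau * V0).
    { assert (h0 : 0 < kq * V t * exp (c * t)) by (apply Rmult_lt_0_compat; [apply Rmult_lt_0_compat|]; lra).
      assert (tau * exp (c * t) < kq * V0 + tau).
      { replace ((kq * V t + tau) * exp (c * t)) with (kq * V t * exp (c * t) + tau * exp (c * t)) in CL by ring. lra. }
      replace (1 + kq / tau * V0) with ((kq * V0 + tau) / tau) by (field; lra).
      apply (Rmult_lt_reg_l tau); [lra|]. field_simplify; lra. }
    apply ln_increasing in hlt; [|auto]. rewrite ln_exp in hlt.
    fold c in hT.
    assert (t < 1 / c * ln (1 + kq / tau * V0)).
    { replace t with (1 / c * (c * t)) by (field; lra).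
      apply Rmult_lt_compat_l; [apply Rdiv_lt_0_compat|]; lra. }
    lra. }
  unfold V in hVt. apply sqrt_eq_0 in hVt; [|apply Rplus_le_le_0_compat; apply pow2_ge_0].
  pose proof (pow2_ge_0 (sin (el t))). pose proof (pow2_ge_0 (sin (eo t))).
  assert (hs1 : sin (el t) = 0) by nra.
  assert (hs2 : sin (eo t) = 0) by nra.
  destruct (hreg t ht0) as [r1 r2].
  change (Rabs (el t) <= delta) in r1. change (Rabs (eo t) <= delta) in r2.
  split; apply sin0.
  - change (Rabs (el t) < PI). lra.
  - exact hs1.
  - change (Rabs (eo t) < PI). lra.
  - exact hs2.
Qed.
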